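(* Let $A\in\mathbb Z^{d\times n}$ with $\ker(A)\cap\mathbb N^n=\{0\}$ and let $B\subseteq\ker(A)$. If $B$ is distance reducing, then for every $z\in D(A)$ we have $z\in B$ or $-z\in B$. If $B$ is strongly distance reducing, then for every $z\in D^w(A)$ we have $z\in B$ or $-z\in B$.
   Context: For $z\in\mathbb Z^n$, $z^\pm\in\mathbb N^n$ are the unique vectors with disjoint supports and $z=z^+-z^-$; $\|\cdot\|$ is the $1$-norm; $\le$ on $\mathbb N^n$ is coordinatewise. For $z\in\ker(A)$, a positive (resp. negative) distance decomposition is $z=u+v$ with $u,v\in\ker(A)\setminus\{0\}$, $u^+\le z^+$ (resp. $u^-\le z^-$) and $\|v\|<\|z\|$. $D^+(A)$ (resp. $D^-(A)$) is the set of nonzero $z\in\ker(A)$ with no positive (resp. negative) distance decomposition; $D(A)=D^+(A)\cap D^-(A)$, $D^w(A)=D^+(A)\cup D^-(A)$. For nonzero $z\in\ker(A)$: $u$ reduces $z$ from $z^+$ if some $\varepsilon\in\{\pm1\}$ has $z^++\varepsilon u\in\mathbb N^n$ and $\|z^++\varepsilon u-z^-\|<\|z\|$; from $z^-$ if some $\varepsilon$ has $z^-+\varepsilon u\in\mathbb N^n$ and $\|z^+-(z^-+\varepsilon u)\|<\|z\|$. $B$ is distance reducing if every nonzero $z\in\ker(A)$ is reduced from $z^+$ or $z^-$ by some element of $B$; strongly distance reducing if every such $z$ is reduced from $z^+$ by some element of $B$ and from $z^-$ by some (possibly different) element of $B$. *)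

(* Defs.v *)
From mathcomp Require Import all_boot all_order all_algebra.
Set Implicit Arguments. Unset Strict Implicit. Unset Printing Implicit Defensive.
Import Order.TTheory GRing.Theory Num.Theory.
Local Open Scope ring_scope.

Section Defs.
Variables (d n : nat) (A : 'M[int]_(d, n)).

Definition vpos (z : 'cV[int]_n) : 'cV[int]_n := \col_i Num.max (z i 0) 0.
Definition vneg (z : 'cV[int]_n) : 'cV[int]_n := \col_i Num.max (- z i 0) 0.

Definition norm1 (z : 'cV[int]_n) : int := \sum_i `|z i 0|.

Definition inN (z : 'cV[int]_n) : Prop := forall i, 0 <= z i 0.
Definition vle (x y : 'cV[int]_n) : Prop := forall i, x i 0 <= y i 0.

Definition inker (z : 'cV[int]_n) : Prop := A *m z = 0.

Definition pos_dist_decomp (z : 'cV[int]_n) : Prop :=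
  exists u v : 'cV[int]_n,
    [/\ inker u, inker v, u <> 0, v <> 0 &
     [/\ z = u + v, vle (vpos u) (vpos z) & norm1 v < norm1 z]].
Definition neg_dist_decomp (z : 'cV[int]_n) : Prop :=
  exists u v : 'cV[int]_n,
    [/\ inker u, inker v, u <> 0, v <> 0 &
     [/\ z = u + v, vle (vneg u) (vneg z) & norm1 v < norm1 z]].

Definition Dplus (z : 'cV[int]_n) : Prop :=
  [/\ z <> 0, inker z & ~ pos_dist_decomp z].
Definition Dminus (z : 'cV[int]_n) : Prop :=
  [/\ z <> 0, inker z & ~ neg_dist_decomp z].
Definition Dset (z : 'cV[int]_n) : Prop := Dplus z /\ Dminus z.
Definition Dweak (z : 'cV[int]_n) : Prop := Dplus z \/ Dminus z.

Definition reduces_plus (u z : 'cV[int]_n) : Prop :=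
  exists eps : int, (eps = 1 \/ eps = -1) /\
    inN (vpos z + eps *: u) /\ norm1 (vpos z + eps *: u - vneg z) < norm1 z.
Definition reduces_minus (u z : 'cV[int]_n) : Prop :=
  exists eps : int, (eps = 1 \/ eps = -1) /\
    inN (vneg z + eps *: u) /\ norm1 (vpos z - (vneg z + eps *: u)) < norm1 z.

Definition distance_reducing (B : 'cV[int]_n -> Prop) : Prop :=
  forall z, inker z -> z <> 0 ->
    exists2 u, B u & (reduces_plus u z \/ reduces_minus u z).
Definition strongly_distance_reducing (B : 'cV[int]_n -> Prop) : Prop :=
  forall z, inker z -> z <> 0 ->
    (exists2 u, B u & reduces_plus u z) /\ (exists2 u, B u & reduces_minus u z).
End Defs.

(* Main.v *)
Require Import Defs.
From mathcomp Require Import all_boot all_order all_algebra zify.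
Import Order.TTheory GRing.Theory Num.Theory.
Local Open Scope ring_scope.

Lemma mxE0 (x : int) : Num.max x 0 - Num.max (-x) 0 = x.
Proof. rewrite !maxEle; case: ifP; case: ifP; lia. Qed.

Lemma vposneg n (z : 'cV[int]_n) : vpos z - vneg z = z.
Proof. by apply/matrixP => i j; rewrite ord1 !mxE mxE0. Qed.

Lemma inkerD d n (A : 'M[int]_(d, n)) u v : inker A u -> inker A v -> inker A (u + v).
Proof. by rewrite /inker mulmxDr => -> ->; rewrite addr0. Qed.
Lemma inkerN d n (A : 'M[int]_(d, n)) u : inker A u -> inker A (- u).
Proof. by rewrite /inker mulmxN => ->; rewrite oppr0. Qed.

Lemma plus_case d n (A : 'M[int]_(d, n)) (B : 'cV[int]_n -> Prop) z u :
  (forall u, B u -> inker A u) -> inker A z -> ~ pos_dist_decomp A z ->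
  B u -> reduces_plus u z -> B z \/ B (- z).
Proof.
move=> HB Hz ND Bu [eps [He [HN Hn]]].
have Ku := HB _ Bu.
case: He => ?; subst eps; move: HN Hn; rewrite ?scale1r ?scaleN1r addrAC vposneg => HN Hn.
- have [E|NE] := eqVneq (z + u) 0.
    right; move/eqP: E; rewrite addr_eq0 => /eqP ->; by rewrite opprK.
  exfalso; apply: ND; exists (- u), (z + u); split.
  + exact: inkerN.
  + exact: inkerD. 
  + move=> /eqP; rewrite oppr_eq0 => /eqP u0; move: Hn; rewrite u0 addr0 ltxx //.
  + exact/eqP.
  split; first by rewrite addrCA addNr addr0.
  + by move=> i; move: (HN i); rewrite !mxE; move: (z i 0) (u i 0) => a b; rewrite !maxEle; case: ifP; case: ifP; lia.
  + exact: Hn.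
- have [E|NE] := eqVneq (z - u) 0.
    left; move/eqP: E; rewrite subr_eq0 => /eqP ->; exact: Bu.
  exfalso; apply: ND; exists u, (z - u); split.
  + exact: Ku.
  + apply: inkerD => //; exact: inkerN.
  + move=> u0; move: Hn; rewrite u0 subr0 ltxx //.
  + exact/eqP.
  split; first by rewrite addrC subrK.
  + by move=> i; move: (HN i); rewrite !mxE; move: (z i 0) (u i 0) => a b; rewrite !maxEle; case: ifP; case: ifP; lia.
  + exact: Hn.
Qed.

Lemma minus_case d n (A : 'M[int]_(d, n)) (B : 'cV[int]_n -> Prop) z u :
  (forall u, B u -> inker A u) -> inker A z -> ~ neg_dist_decomp A z ->
  B u -> reduces_minus u z -> B z \/ B (- z).
Proof.
move=> HB Hz ND Bu [eps [He [HN Hn]]].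
have Ku := HB _ Bu.
case: He => ?; subst eps; move: HN Hn;
  rewrite ?scale1r ?scaleN1r opprD addrA vposneg => HN Hn.
- have [E|NE] := eqVneq (z - u) 0.
    left; move/eqP: E; rewrite subr_eq0 => /eqP ->; exact: Bu.
  exfalso; apply: ND; exists u, (z - u); split.
  + exact: Ku.
  + apply: inkerD => //; exact: inkerN.
  + move=> u0; move: Hn; rewrite u0 subr0 ltxx //.
  + exact/eqP.
  split; first by rewrite addrC subrK.
  + by move=> i; move: (HN i); rewrite !mxE; move: (z i 0) (u i 0) => a b; rewrite !maxEle; case: ifP; case: ifP; lia.
  + exact: Hn.
- rewrite opprK in Hn.
  have [E|NE] := eqVneq (z + u) 0.
    right; move/eqP: E; rewrite addr_eq0 => /eqP ->; by rewrite opprK.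
  exfalso; apply: ND; exists (- u), (z + u); split.
  + exact: inkerN.
  + exact: inkerD.
  + move=> /eqP; rewrite oppr_eq0 => /eqP u0; move: Hn; rewrite u0 addr0 ltxx //.
  + exact/eqP.
  split; first by rewrite addrCA addNr addr0.
  + by move=> i; move: (HN i); rewrite !mxE; move: (z i 0) (u i 0) => a b; rewrite !maxEle; case: ifP; case: ifP; lia.
  + exact: Hn.
Qed.

Theorem proposition8p4 (d n : nat) (A : 'M[int]_(d, n)) (B : 'cV[int]_n -> Prop) :
  (forall z : 'cV[int]_n, inker A z -> inN z -> z = 0) ->
  (forall u, B u -> inker A u) ->
  (distance_reducing A B -> forall z, Dset A z -> B z \/ B (- z)) /\
  (strongly_distance_reducing A B -> forall z, Dweak A z -> B z \/ B (- z)).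
Proof.
move=> _ HB; split.
- move=> DR z [[z0 Kz NP] [_ _ NM]].
  have [u Bu [R|R]] := DR z Kz z0.
  + exact: plus_case HB Kz NP Bu R.
  + exact: minus_case HB Kz NM Bu R.
- move=> DR z [[z0 Kz NP]|[z0 Kz NM]].
  + have [[u Bu R] _] := DR z Kz z0; exact: plus_case HB Kz NP Bu R.
  + have [_ [u Bu R]] := DR z Kz z0; exact: minus_case HB Kz NM Bu R.
Qed.
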